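(* Let $q\in X^*\setminus\{e\}$ and let $\lambda_q$ be the largest positive real root of $\mathfrak{p}_q(t):=t^{|q|}-\sum_{v\in\sqrt[*]{P_q}}t^{|q|-|v|}$. There exist a constant $c_{q,1}>0$ and an $\omega$-word $\xi\in P_q^\omega$ (i.e. $\xi$ is quasiperiodic with quasiperiod $q$) such that $f(\xi,n)\ge c_{q,1}\lambda_q^n$ for all $n\in\mathbb{N}$.
   Context: $X$ is a finite alphabet with $|X|\ge2$; $X^*$ the finite words (empty word $e$), $X^\omega$ the infinite words, $X^n$ the words of length $n$. $w\sqsubseteq\eta$ means $w$ is a prefix of $\eta$, $w\sqsubset\eta$ a proper prefix. For a language $L$, $L^\omega:=\{w_1w_2\cdots: w_i\in L\setminus\{e\}\}$. An $\omega$-word $\xi$ is quasiperiodic with quasiperiod $q$ if for every $j\in\mathbb{N}$ there is a prefix $u_j\sqsubseteq\xi$ with $j-|q|<|u_j|\le j$ and $u_j\cdot q\sqsubseteq\xi$; these are exactly the elements of $P_q^\omega$. $f(\xi,n):=|\mathrm{infix}(\xi)\cap X^n|$ is the number of distinct factors of $\xi$ of length $n$. $P_q:=\{v: e\sqsubset v\sqsubseteq q\sqsubset v\cdot q\}$, and $\sqrt[*]{P_q}:=P_q\setminus(P_q^2\cdot P_q^* )$. *)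

(* Defs.v *)
From mathcomp Require Import all_boot.
From Stdlib Require Import Reals ClassicalEpsilon.

Set Implicit Arguments.
Unset Strict Implicit.
Unset Printing Implicit Defensive.

Section Words.
Variable X : finType.

Definition oword := nat -> X.

Definition asb (P : Prop) : bool :=
  if excluded_middle_informative P then true else false.

Definition oprefix (w : seq X) (xi : oword) : Prop :=
  w = mkseq xi (size w).

Definition inP (q v : seq X) : Prop :=
  v <> [::] /\ prefix v q /\ prefix q (v ++ q) /\ q <> v ++ q.

Definition inP2Pstar (q v : seq X) : Prop :=
  exists ws : seq (seq X), (2 <= size ws)%N /\ (forall w, w \in ws -> inP q w)
                           /\ flatten ws = v.

Definition inRootP (q v : seq X) : Prop := inP q v /\ ~ inP2Pstar q v.

(* p_q(t) = t^|q| - sum_{v in rootP_q} t^(|q|-|v|).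
   Every v in rootP_q is a nonempty prefix of q, i.e. v = take k q with
   1 <= k <= |q|, and these prefixes are pairwise distinct. *)
Definition pq (q : seq X) (t : R) : R :=
  (t ^ size q -
   foldr Rplus 0%R
     [seq (if asb (inRootP q (take k q)) then t ^ (size q - k) else 0)%R
     | k <- iota 1 (size q)])%R.

Definition inPomega (q : seq X) (xi : oword) : Prop :=
  exists w : nat -> seq X,
    (forall i, inP q (w i)) /\
    (forall i, oprefix (flatten (mkseq w i.+1)) xi).

Definition factor_at (xi : oword) (i n : nat) : seq X :=
  mkseq (fun j => xi (i + j)) n.

Definition fcompl (xi : oword) (n : nat) : nat :=
  #|[set t : n.-tuple X | asb (exists i, factor_at xi i n = val t)]|.

End Words.

(* Main.v *)
Require Import Defs.
From mathcomp Require Import all_boot.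
From Stdlib Require Import Reals.
From Stdlib Require Import Lra ClassicalEpsilon.

Set Implicit Arguments.
Unset Strict Implicit.
Unset Printing Implicit Defensive.


Lemma mkseq_add (A : Type) (f : nat -> A) a b :
  mkseq f (a + b) = mkseq f a ++ mkseq (fun i => f (a + i)) b.
Proof.
rewrite /mkseq iotaD map_cat add0n; congr (_ ++ _).
by rewrite -{1}[a]addn0 iotaDl -map_comp.
Qed.

Section Stream.
Variables (A : Type) (d : A) (b : nat -> seq A).
Hypothesis hb : forall k, 0 < size (b k).

Definition spre N := flatten (mkseq b N).
Definition stream (i : nat) : A := nth d (spre i.+1) i.

Lemma preS N : spre N.+1 = spre N ++ b N.
Proof. by rewrite /spre mkseqS -cats1 flatten_cat /= cats0. Qed.

Lemma pre_ext N N' : N <= N' -> exists s, spre N' = spre N ++ s.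
Proof.
move=> /subnKC <-; elim: (N' - N) => [|k [s IH]].
  by exists [::]; rewrite addn0 cats0.
by exists (s ++ b (N + k)); rewrite addnS preS IH catA.
Qed.

Lemma size_pre N : N <= size (spre N).
Proof.
elim: N => [//|N IH]; rewrite preS size_cat.
by rewrite -addn1 leq_add // hb.
Qed.

Lemma stream_pre N j : j < size (spre N) -> stream j = nth d (spre N) j.
Proof.
move=> hj; rewrite /stream.
have [s1 E1] := pre_ext (leq_maxl N j.+1).
have [s2 E2] := pre_ext (leq_maxr N j.+1).
have h2 : j < size (spre j.+1) by apply: leq_trans (size_pre _).
have : nth d (spre (maxn N j.+1)) j = nth d (spre (maxn N j.+1)) j by [].
by rewrite {1}E1 E2 !nth_cat hj h2.
Qed.

Lemma stream_factor M u s v : spre M = u ++ s ++ v ->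
  mkseq (fun i => stream (size u + i)) (size s) = s.
Proof.
move=> E; apply: (@eq_from_nth _ d); rewrite size_mkseq // => i hi.
rewrite nth_mkseq // (@stream_pre M); last by rewrite E !size_cat ltn_add2l ltn_addr.
by rewrite E nth_cat ltnNge leq_addr /= addKn nth_cat hi.
Qed.

Lemma stream_prefix N : mkseq stream (size (spre N)) = spre N.
Proof.
have := @stream_factor N [::] (spre N) [::]; rewrite cats0 /=.
by move=> /(_ erefl); under eq_mkseq do rewrite add0n.
Qed.

Lemma stream_P (P : A -> Prop) : P d -> (forall k i, P (nth d (b k) i)) ->
  forall i, P (stream i).
Proof.
move=> Pd Pb i; rewrite /stream; move: (i.+1) => N; elim: N i => [|N IH] j.
  by rewrite /spre /= nth_nil.
by rewrite preS nth_cat; case: ifP.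
Qed.
End Stream.


Section W.
Variables (X : finType) (q : seq X).

Definition Pstar (y : seq X) : Prop :=
  exists ws : seq (seq X), (forall w, w \in ws -> inP q w) /\ flatten ws = y.

Lemma prefix2 (a b z : seq X) :
  prefix a z -> prefix b z -> size a <= size b -> prefix a b.
Proof.
rewrite !prefixE => /eqP ha /eqP hb hs.
by rewrite -hb take_takel // ha.
Qed.

Lemma inP_q : q <> [::] -> inP q q.
Proof.
move=> hq; split=> //; split; first exact: prefix_refl.
split; first exact: prefix_prefix.
move=> /(congr1 size); rewrite size_cat => /eqP; rewrite -{1}[size q]add0n eqn_add2r.
by case: (q) hq.
Qed.

Lemma inP_size v : inP q v -> 0 < size v <= size q /\ take (size v) q = v.
Proof.
move=> [hv [hp _]]; split.
  by rewrite size_prefix // andbT; case: (v) hv.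
by move: hp; rewrite prefixE => /eqP.
Qed.

Lemma Pstar_nil : Pstar [::].
Proof. by exists [::]. Qed.

Lemma Pstar_cat y z : Pstar y -> Pstar z -> Pstar (y ++ z).
Proof.
move=> [ws [h1 <-]] [ws' [h2 <-]]; exists (ws ++ ws'); split; last exact: flatten_cat.
by move=> w; rewrite mem_cat => /orP [] ?; [apply: h1|apply: h2].
Qed.

Lemma Pstar_cons v y : inP q v -> Pstar y -> Pstar (v ++ y).
Proof.
move=> hv; apply: Pstar_cat; exists [:: v]; split; last by rewrite /= cats0.
by move=> w; rewrite inE => /eqP ->.
Qed.

Lemma Pstar_pref y : Pstar y -> prefix q (y ++ q).
Proof.
move=> [ws [h <-]]; elim: ws h => [|w ws IH] h /=; first exact: prefix_refl.
have hw : inP q w by apply: h; rewrite inE eqxx.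
have := IH (fun w' hw' => h w' (@mem_behead _ (w :: ws) w' hw')).
move=> /prefixP [s E]; move: hw => [_ [_ [/prefixP [s' E'] _]]].
by apply/prefixP; exists (s' ++ s); rewrite -catA E catA -E' catA.
Qed.

Lemma code_lemma v v' y y' : inP q v -> inRootP q v' -> size v < size v' ->
  Pstar y -> Pstar y' -> v ++ y = v' ++ y' -> False.
Proof.
move=> hv [hv' hR] hs py py' E.
have [/andP [_ hvq] tv] := inP_size hv.
have [/andP [_ hv'q] tv'] := inP_size hv'.
have pvv' : prefix v v'.
  apply: (@prefix2 _ _ q); [by case: hv => _ [] | by case: hv' => _ [] | exact: ltnW].
move: pvv' => /prefixP [x Ex].
have hx : x <> [::] by move=> x0; move: hs; rewrite Ex x0 cats0 ltnn.
have Ey : y = x ++ y' by move: E; rewrite Ex -catA => /(congr1 (drop (size v))); rewrite !drop_size_cat.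
have p1 := Pstar_pref py.
have p2 := Pstar_pref py'.
have p3 : prefix (x ++ q) (y ++ q).
  by move: p2 => /prefixP [s Es]; apply/prefixP; exists s; rewrite Ey -!catA Es.
have sxq : size x <= size q.
  by apply: leq_trans hv'q; rewrite Ex size_cat leq_addl.
have hxP : inP q x.
  split=> //; split.
    apply: (@prefix2 _ _ (y ++ q)) => //; exact: catl_prefix p3.
  split; first by apply: (@prefix2 _ _ (y ++ q)) => //; rewrite size_cat leq_addl.
  move=> /(congr1 size); rewrite size_cat => /eqP; rewrite -{1}[size q]add0n eqn_add2r.
  by case: (x) hx.
apply: hR; exists [:: v; x]; split; first by [].
split; last by rewrite /= cats0.
by move=> w; rewrite !inE => /orP [] /eqP ->.
Qed.
End W.


Lemma asbT (P : Prop) : asb P -> P.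
Proof. by rewrite /asb; case: excluded_middle_informative. Qed.
Lemma asbI (P : Prop) : P -> asb P.
Proof. by rewrite /asb; case: excluded_middle_informative. Qed.

Lemma card_union (T : finType) (S : {set T}) (img : nat -> {set T}) (l : seq nat) (B : {set T}) :
  uniq l -> (forall k, k \in l -> img k \subset S) ->
  (forall k k', k \in l -> k' \in l -> k != k' -> img k :&: img k' = set0) ->
  B \subset S -> (forall k, k \in l -> B :&: img k = set0) ->
  #|B| + foldr (fun k a => #|img k| + a) 0 l <= #|S|.
Proof.
elim: l B => [|k l IH] B /=; first by rewrite addn0 => *; apply: subset_leq_card.
move=> /andP [kl ul] hS hD hB hBD.
rewrite addnA.
have -> : #|B| + #|img k| = #|B :|: img k|.
  by rewrite cardsU hBD ?inE ?eqxx // cards0 subn0.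
apply: IH => //.
- by move=> k' h; apply: hS; rewrite inE h orbT.
- by move=> k1 k2 h1 h2; apply: hD; rewrite inE ?h1 ?h2 orbT.
- by rewrite subUset hB hS // inE eqxx.
- move=> k' h; rewrite setIUl hBD ?inE ?h ?orbT // hD ?inE ?eqxx ?h ?orbT //.
  + by rewrite setU0.
  + by apply: contraNneq kl => ->.
Qed.

Lemma factor_take (X : finType) (xi : oword X) i n L : n <= L ->
  factor_at xi i n = take n (factor_at xi i L).
Proof.
move=> /subnKC <-; rewrite /factor_at mkseq_add take_size_cat //.
by rewrite size_mkseq.
Qed.

Section Count.
Variables (X : finType) (q : seq X) (x0 : X).
Hypothesis hq : q <> [::].

Definition Aset j : {set j.-tuple X} := [set t | asb (Pstar q (val t))].

Definition Rl := [seq k <- iota 1 (size q) | asb (inRootP q (take k q))].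

Definition phi k N (y : (N - k).-tuple X) : N.-tuple X :=
  insubd (nseq_tuple N x0) (take k q ++ val y).

Lemma phiE k N (y : (N - k).-tuple X) : k <= N -> k <= size q ->
  val (phi y) = take k q ++ val y.
Proof.
move=> hkN hkq; rewrite /phi val_insubd size_cat size_tuple size_take.
have -> : (if k < size q then k else size q) = k by case: ltngtP hkq => // ->.
by rewrite subnKC // eqxx.
Qed.

Lemma mem_Rl k : k \in Rl -> [/\ 0 < k, k <= size q & inRootP q (take k q)].
Proof.
by rewrite mem_filter mem_iota add1n ltnS => /andP [/asbT ? /andP [? ?]].
Qed.

Lemma rec_ineq N :
  foldr (fun k a => #|Aset (N - k)| + a) 0 [seq k <- Rl | k <= N] <= #|Aset N|.
Proof.
set img := fun k => [set phi y | y in Aset (N - k)].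
have E : forall l, (forall k, k \in l -> k \in Rl /\ k <= N) ->
    foldr (fun k a => #|Aset (N - k)| + a) 0 l = foldr (fun k a => #|img k| + a) 0 l.
  elim=> [//|k l IH] h /=; rewrite IH; last by move=> k' hk'; apply: h; rewrite inE hk' orbT.
  have [hk hkN] := h k (mem_head _ _).
  have [_ hkq _] := mem_Rl hk.
  congr (_ + _); rewrite card_imset //.
  move=> y y' /(congr1 val); rewrite !phiE // => /(congr1 (drop k)).
  rewrite !drop_size_cat ?size_takel // => e; exact: val_inj.
rewrite E; last by move=> k; rewrite mem_filter => /andP [].
have := @card_union _ (Aset N) img [seq k <- Rl | k <= N] set0.
rewrite cards0 add0n; apply.
- by apply: filter_uniq; apply: filter_uniq; apply: iota_uniq.
- move=> k; rewrite mem_filter => /andP [hkN /mem_Rl [_ hkq [hr _]]].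
  apply/subsetP => t /imsetP [y]; rewrite inE => /asbT hy ->.
  rewrite inE; apply: asbI; rewrite phiE //; exact: Pstar_cons.
- move=> k k'; rewrite mem_filter => /andP [hkN /mem_Rl [_ hkq [hr hr']]].
  rewrite mem_filter => /andP [hkN' /mem_Rl [_ hkq' [hr2 hr2']]] hne.
  apply/setP => t; rewrite inE in_set0; apply/negP => /andP [].
  move=> /imsetP [y]; rewrite inE => /asbT hy ->.
  move=> /imsetP [y']; rewrite inE => /asbT hy' /(congr1 val).
  rewrite !phiE // => e.
  case: (ltngtP k k') => hkk; last by rewrite hkk eqxx in hne.
  + apply: (@code_lemma _ q (take k q) (take k' q) (val y) (val y')) => //.
    * by rewrite !size_takel.
  + apply: (@code_lemma _ q (take k' q) (take k q) (val y') (val y)) => //.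
    * by rewrite !size_takel.
- exact: sub0set.
- by move=> *; rewrite set0I.
Qed.

Lemma A0 : 0 < #|Aset 0|.
Proof.
apply/card_gt0P; exists [tuple]; rewrite inE; apply: asbI.
have -> : val ([tuple] : 0.-tuple X) = [::] by [].
exact: Pstar_nil.
Qed.

Lemma A_le_f (xi : oword X) :
  (forall y, Pstar q y -> exists i, factor_at xi i (size y) = y) ->
  forall j n, j <= n -> #|Aset j| <= fcompl xi n.
Proof.
move=> Hf j n hjn.
set pad := fun t : j.-tuple X =>
  insubd (nseq_tuple n x0) (take n (val t ++ flatten (nseq n q))) : n.-tuple X.
have hsz : forall t : j.-tuple X, size (take n (val t ++ flatten (nseq n q))) = n.
  move=> t; rewrite size_takel // size_cat size_flatten.
  have -> : forall k, sumn (shape (nseq k q)) = k * size q.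
    by move=> k; rewrite /shape map_nseq; elim: k => //= k ->; rewrite mulSn.
  apply: leq_trans (leq_addl _ _); rewrite leq_pmulr //.
  by case: (q) hq.
have pval : forall t, val (pad t) = take n (val t ++ flatten (nseq n q)).
  by move=> t; rewrite /pad val_insubd hsz eqxx.
rewrite -(card_imset (Aset j) (f := pad)); last first.
  move=> t t' /(congr1 val); rewrite !pval => /(congr1 (take j)).
  rewrite !take_takel // !take_size_cat ?size_tuple // => e; exact: val_inj.
rewrite /fcompl; apply: subset_leq_card; apply/subsetP => t' /imsetP [t].
move=> ht0 ->; have ht : Pstar q (val t) by move: ht0; rewrite inE => /asbT.
rewrite inE; apply: asbI.
have hP : Pstar q (val t ++ flatten (nseq n q)).
  apply: Pstar_cat => //; exists (nseq n q); split => //.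
  by move=> w /nseqP [-> _]; exact: inP_q.
have [i hi] := Hf _ hP; exists i.
rewrite pval (@factor_take _ _ _ _ (size (val t ++ flatten (nseq n q)))); first by rewrite hi.
rewrite -[leqLHS](hsz t); apply: size_prefix; exact: prefix_take.
Qed.
End Count.


Section Build.
Variables (X : finType) (q : seq X) (x0 : X).
Hypothesis hq : q <> [::].

Definition word k := if asb (inP q (take k.+1 q)) then take k.+1 q else q.
Definition blocks N : seq (seq X) := q :: map word (CodeSeq.decode N).
Definition wst := stream q blocks.

Lemma word_inP k : inP q (word k).
Proof. rewrite /word; case: ifP => [/asbT //|_]; exact: inP_q. Qed.

Lemma word_of v : inP q v -> word (size v).-1 = v.
Proof.
move=> hv; have [/andP [h0 _] ht] := inP_size hv.
by rewrite /word prednK // ht asbI.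
Qed.

Lemma blocks_gt0 k : 0 < size (blocks k). Proof. by []. Qed.

Lemma wst_inP i : inP q (wst i).
Proof.
apply: stream_P; first exact: inP_q.
move=> k [|i'] /=; first exact: inP_q.
case: (ltnP i' (size (map word (CodeSeq.decode k)))) => h.
  by rewrite (nth_map 0); [exact: word_inP | rewrite size_map in h].

by rewrite nth_default //; exact: inP_q.
Qed.

Lemma wst_gt0 i : 0 < size (wst i).
Proof. by have [h _] := wst_inP i; case: (wst i) h. Qed.

Definition xist : oword X := stream x0 wst.

Lemma xist_omega : inPomega q xist.
Proof.
exists wst; split; first exact: wst_inP.
move=> i; rewrite /oprefix; symmetry.
exact: (@stream_prefix _ x0 wst wst_gt0 i.+1).
Qed.

Lemma xist_factor y : Pstar q y -> exists i, factor_at xist i (size y) = y.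
Proof.
move=> [ws [hws <-]].
set N := CodeSeq.code (map (fun v => (size v).-1) ws).
have hb : blocks N = q :: ws.
  rewrite /blocks /N CodeSeq.codeK -map_comp; congr (_ :: _).
  rewrite -[RHS]map_id; apply/eq_in_map => v hv /=; exact: word_of (hws _ hv).
set P := size (spre blocks N ++ [:: q]).
have f1 : mkseq (fun i => wst (P + i)) (size ws) = ws.
  apply: (@stream_factor _ q blocks blocks_gt0 N.+1 _ _ [::]).
  by rewrite preS hb cats0 -catA.
exists (size (spre wst P)).
apply: (@stream_factor _ x0 wst wst_gt0 (P + size ws) _ _ [::]).
by rewrite cats0 /spre mkseq_add f1 flatten_cat.
Qed.
End Build.


Definition rsum (l : seq nat) (g : nat -> R) : R :=
  foldr (fun k acc => (g k + acc)%R) 0%R l.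

Lemma rsum_lin l a f g h :
  rsum l (fun k => a * f k + g k - h k)%R = (a * rsum l f + rsum l g - rsum l h)%R.
Proof. elim: l => [|k l IH] /=; rewrite /rsum /= ?IH; [ring|]. rewrite -/(rsum l _) IH -!/(rsum l _); ring. Qed.

Lemma rsum_scal l a f : rsum l (fun k => a * f k)%R = (a * rsum l f)%R.
Proof. elim: l => [|k l IH] /=; rewrite /rsum /=; [ring|]. rewrite -!/(rsum l _) IH; ring. Qed.

Lemma rsum_ext l f g : (forall k, k \in l -> f k = g k) -> rsum l f = rsum l g.
Proof.
elim: l => [//|k l IH] h; rewrite /rsum /= -!/(rsum l _) h ?mem_head // IH //.
by move=> k' hk'; apply: h; rewrite inE hk' orbT.
Qed.

Lemma rsum_le l f g : (forall k, k \in l -> f k <= g k)%R -> (rsum l f <= rsum l g)%R.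
Proof.
elim: l => [|k l IH] h; rewrite /rsum /= -?/(rsum l _); first lra.
have h1 := h k (mem_head _ _).
have h2 : (rsum l f <= rsum l g)%R by apply: IH => k' hk'; apply: h; rewrite inE hk' orbT.
lra.
Qed.

Lemma rsum_filter l (p : pred nat) g :
  rsum (filter p l) g = rsum l (fun k => if p k then g k else 0%R).
Proof.
elim: l => [//|k l IH]; rewrite /= /rsum /=; case: (p k) => /=; rewrite -!/(rsum _ _) IH //; ring.
Qed.

Lemma INR_foldr l (F : nat -> nat) :
  INR (foldr (fun k acc => F k + acc) 0 l) = rsum l (fun k => INR (F k)).
Proof. by elim: l => [//|k l IH]; rewrite /= plus_INR IH. Qed.

Lemma pow_addn x (i j : nat) : (x ^ (i + j) = x ^ i * x ^ j)%R.
Proof. exact: pow_add. Qed.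

Section Growth.
Local Open Scope R_scope.
Variables (lam : R) (m : nat) (Rl : seq nat) (a F : nat -> nat).
Hypotheses (hlam : 0 < lam) (hm : (0 < m)%nat)
  (hRl : forall k, k \in Rl -> (0 < k <= m)%nat)
  (hrec : forall N, (foldr (fun k acc => a (N - k) + acc) 0 [seq k <- Rl | k <= N] <= a N)%nat)
  (ha0 : (0 < a 0)%nat)
  (haF : forall j n, (j <= n)%nat -> (a j <= F n)%nat)
  (hsum : rsum Rl (fun k => (/ lam) ^ k) = 1).

Let rho := / lam.
Let b j := INR (a j) * rho ^ j.

Lemma rho_pos : 0 < rho. Proof. by apply: Rinv_0_lt_compat. Qed.
Lemma b_ge0 j : 0 <= b j.
Proof. apply: Rmult_le_pos; [exact: pos_INR | apply: pow_le; exact: Rlt_le rho_pos]. Qed.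

Fixpoint S (n k : nat) : R :=
  match k with 0 => 0 | k'.+1 => S n k' + (if (k' <= n)%nat then b (n - k') else 0) end.

Lemma S_step n k :
  S n.+1 k = b n.+1 + S n k - (if (k <= n.+1)%nat then b (n.+1 - k) else 0).
Proof.
elim: k => [|k IH] /=; first by rewrite subn0; ring.
rewrite IH ltnS subSS; case: (k <= n)%nat; case: (k <= n.+1)%nat; ring.
Qed.

Definition Psi n := rsum Rl (fun k => rho ^ k * S n k).

Lemma T_le N :
  rsum Rl (fun k => rho ^ k * (if (k <= N)%nat then b (N - k) else 0)) <= b N.
Proof.
have h := hrec N; move/leP: h => /le_INR; rewrite INR_foldr rsum_filter => h.
rewrite (@rsum_ext _ _ (fun k => rho ^ N * (if (k <= N)%nat then INR (a (N - k)) else 0))).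
  rewrite rsum_scal /b (Rmult_comm (INR (a N))); apply: Rmult_le_compat_l => //.
  apply: pow_le; exact: Rlt_le rho_pos.
move=> k _; case: ifP => // hk; last by ring.
rewrite /b -{3}(subnKC hk) pow_addn; ring.
Qed.

Lemma S0 k : (0 < k)%nat -> S 0 k = b 0.
Proof.
elim: k => [//|[|k] IH] _.
  by rewrite /= Rplus_0_l.
by rewrite /S -/S ltn0 Rplus_0_r; apply: IH.
Qed.

Lemma Psi_ge1 n : 1 <= Psi n.
Proof.
elim: n => [|n IH].
  rewrite /Psi (@rsum_ext _ _ (fun k => b 0 * rho ^ k)); last first.
    by move=> k hk; rewrite S0; [ring | case/andP: (hRl hk)].
  rewrite rsum_scal hsum /b /= Rmult_1_r Rmult_1_r.
  by apply: (le_INR 1); apply/leP.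
have E : Psi n.+1 = b n.+1 * rsum Rl (fun k => rho ^ k) + Psi n
     - rsum Rl (fun k => rho ^ k * (if (k <= n.+1)%nat then b (n.+1 - k) else 0)).
  rewrite /Psi -rsum_lin; apply: rsum_ext => k _; rewrite S_step; ring.
have := T_le n.+1; rewrite E hsum; lra.
Qed.

Lemma S_mono n k k' : (k <= k')%nat -> S n k <= S n k'.
Proof.
move=> /subnKC <-; elim: (k' - k)%nat => [|d IH]; first by rewrite addn0; lra.
rewrite addnS /=; case: ifP => _; have := b_ge0 (n - (k + d)); lra.
Qed.

Lemma Psi_le n : Psi n <= S n m.
Proof.
apply: (@Rle_trans _ (rsum Rl (fun k => S n m * rho ^ k))).
  apply: rsum_le => k hk; rewrite Rmult_comm; apply: Rmult_le_compat_r.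
    apply: pow_le; exact: Rlt_le rho_pos.
  by apply: S_mono; case/andP: (hRl hk).
by rewrite rsum_scal hsum; lra.
Qed.

Let C := (1 + lam) ^ (m - 1).

Lemma S_bound n k : (k <= m)%nat -> S n k <= INR k * (rho ^ n * C * INR (F n)).
Proof.
elim: k => [|k IH] hk; first by rewrite /=; lra.
have IH' := IH (ltnW hk).
rewrite S_INR [S n k.+1]/=.
suff : (if (k <= n)%nat then b (n - k) else 0) <= rho ^ n * C * INR (F n) by lra.
have hF0 : 0 <= INR (F n) by exact: pos_INR.
have hC0 : 0 <= C by apply: pow_le; lra.
have hr : 0 <= rho ^ n by apply: pow_le; exact: Rlt_le rho_pos.
case: ifP => hkn; last by apply: Rmult_le_pos => //; apply: Rmult_le_pos.
rewrite /b.
have e : rho ^ (n - k) = rho ^ n * lam ^ k.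
  rewrite -{2}(subnK hkn) pow_addn Rmult_assoc -Rpow_mult_distr /rho Rinv_l; last lra.
  by rewrite pow1 Rmult_1_r.
rewrite e.
have haf : INR (a (n - k)) <= INR (F n) by apply: le_INR; apply/leP; apply: haF; exact: leq_subr.
have hlk : lam ^ k <= C.
  apply: (@Rle_trans _ ((1 + lam) ^ k)); first by apply: pow_incr; lra.
  apply: Rle_pow; first lra.
  by apply/leP; rewrite -ltnS subn1 prednK.
have hlk0 : 0 <= lam ^ k by apply: pow_le; lra.
have ha0' : 0 <= INR (a (n - k)) by exact: pos_INR.
apply: (@Rle_trans _ (INR (F n) * (rho ^ n * lam ^ k))).
  by apply: Rmult_le_compat_r => //; apply: Rmult_le_pos.
rewrite (Rmult_comm (INR (F n))).
by apply: Rmult_le_compat_r => //; apply: Rmult_le_compat_l.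
Qed.

Lemma growth : exists c, 0 < c /\ forall n, c * lam ^ n <= INR (F n).
Proof.
have hC : 0 < C by apply: pow_lt; lra.
have hm' : 0 < INR m by apply: (lt_INR 0); apply/ltP.
exists (/ (INR m * C)); split; first by apply: Rinv_0_lt_compat; nra.
move=> n.
have h1 : 1 <= INR m * (rho ^ n * C * INR (F n)).
  apply: Rle_trans (Psi_ge1 n) _; apply: Rle_trans (Psi_le n) _; exact: S_bound.
have hl : 0 < lam ^ n by apply: pow_lt.
have e : rho ^ n * lam ^ n = 1 by rewrite -Rpow_mult_distr /rho Rinv_l ?pow1; lra.
have h2 : lam ^ n <= INR m * C * INR (F n).
  have := Rmult_le_compat_l _ _ _ (Rlt_le _ _ hl) h1.
  have -> : lam ^ n * (INR m * (rho ^ n * C * INR (F n))) = (rho ^ n * lam ^ n) * (INR m * C * INR (F n)) by ring.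
  by rewrite e; lra.
have hmc : 0 < INR m * C by nra.
rewrite Rmult_comm; apply: (Rmult_le_reg_l (INR m * C)) => //.
rewrite -Rmult_assoc (Rmult_comm (INR m * C)) Rmult_assoc Rinv_r; lra.
Qed.
End Growth.

Lemma foldr_rsum (l : seq nat) (g : nat -> R) :
  foldr Rplus 0%R (map g l) = rsum l g.
Proof. by elim: l => [//|k l IH] /=; rewrite IH. Qed.

Unset Implicit Arguments.

Theorem lemma7 (X : finType) (hX : (1 < #|X|)%N) (q : seq X) (hq : q <> [::])
  (lam : R)
  (hlam_pos : (0 < lam)%R) (hlam_root : pq q lam = 0%R)
  (hlam_max : forall t : R, (0 < t)%R -> pq q t = 0%R -> (t <= lam)%R) :
  exists c : R, (0 < c)%R /\
    exists xi : oword X, inPomega q xi /\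
      forall n : nat, (c * lam ^ n <= INR (fcompl xi n))%R.
Proof.
have [x0 _] : exists x0 : X, True by case: (q) hq => [//|x ?] _; exists x.
have hm : (0 < size q)%N by case: (q) hq.
have hRl : forall k, k \in Rl q -> (0 < k <= size q)%N.
  by move=> k /mem_Rl [-> -> _].
have hsum : rsum (Rl q) (fun k => (/ lam) ^ k)%R = 1%R.
  move: hlam_root; rewrite /pq foldr_rsum.
  rewrite -(@rsum_filter (iota 1 (size q)) (fun k => asb (inRootP q (take k q)))) -/(Rl q).
  rewrite (@rsum_ext _ _ (fun k => lam ^ size q * (/ lam) ^ k)%R); last first.
    move=> k /hRl /andP [_ hk].
    rewrite -{2}(subnK hk) pow_addn Rmult_assoc -Rpow_mult_distr Rinv_r; last lra.
    by rewrite pow1 Rmult_1_r.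
  rewrite rsum_scal => h.
  have hl : (lam ^ size q <> 0)%R by apply: pow_nonzero; lra.
  apply: (Rmult_eq_reg_l (lam ^ size q)) => //.
rewrite Rmult_1_r; symmetry; exact: Rminus_diag_uniq h.
have [c [hc hF]] := @growth lam (size q) (Rl q) (fun j => #|Aset q j|)
  (fcompl (xist q x0)) hlam_pos hm hRl (rec_ineq q x0) (A0 q)
  (A_le_f x0 hq (xist_factor x0 hq)) hsum.
exists c; split => //; exists (xist q x0); split; [exact: xist_omega | exact: hF].
Qed.
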